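(* Let $k\ge 4$ and let $w$ be a minimal uncompletable word for $S_k$. Let $p$ and $q$ be two consecutive occurrences of $v=b^{k-1}a$ in $w$ ($p$ before $q$), with sets of forbidden local positions $F_p$ and $F_q$. If $F_q=\{0,i,i+1,\dots,k-2\}$ for some $1\le i\le k-2$, then $|F_p|<|F_q|$.
   Context: $\Sigma=\{a,b\}$. $S_k=\left(\Sigma^k\setminus\{ba^{k-1},b^{k-1}a\}\right)\cup\left(\Sigma^{k-1}\setminus\{a^{k-1},b^{k-1}\}\right)$, $u=ba^{k-1}$, $v=b^{k-1}a$. $\mathit{Fact}(S^* )$ and $\mathit{Pref}(S^* )$ are the sets of factors and of prefixes of words in $S^*$. A word $w\notin\mathit{Fact}(S_k^* )$ is uncompletable; a minimal uncompletable word is one of minimal length. For $w=w_1\cdots w_n$, $w[i..j]=w_i\cdots w_j$ (empty if $i>j$). A position $j$, $0\le j\le n-1$, is forbidden in $w$ if $w[j+1..n]\notin\mathit{Pref}(S_k^* )$. An occurrence of $p\in\{u,v\}$ in $w$ is an index $s$ with $w[s+1..s+k]=p$; local position $i\in\{0,\dots,k-1\}$ is the position $s+i$ of $w$, and it is forbidden in the occurrence if $s+i$ is forbidden in $w$. Two occurrences of words from $\{u,v\}$ starting at $s<t$ overlap if $t<s+k$; they are consecutive if either they overlap or they are the only occurrences of $u$ or $v$ lying inside the factor $w[s+1..t+k]$. *)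

(* Defs.v *)
From mathcomp Require Import all_boot.
Set Implicit Arguments. Unset Strict Implicit. Unset Printing Implicit Defensive.

Definition word := seq bool.
Definition la : bool := false.
Definition lb : bool := true.

Definition u (k : nat) : word := lb :: nseq k.-1 la.
Definition v (k : nat) : word := rcons (nseq k.-1 lb) la.

Definition inS (k : nat) (x : word) : bool :=
  ((size x == k) && (x != u k) && (x != v k))
  || ((size x == k.-1) && (x != nseq k.-1 la) && (x != nseq k.-1 lb)).

Definition inSstar (k : nat) (x : word) : Prop :=
  exists ws : seq word, all (inS k) ws /\ flatten ws = x.

Definition isFact (k : nat) (w : word) : Prop :=
  exists x y : word, inSstar k (x ++ w ++ y).
Definition isPref (k : nat) (w : word) : Prop :=
  exists y : word, inSstar k (w ++ y).

Definition uncompletable (k : nat) (w : word) : Prop := ~ isFact k w.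

Definition min_uncompletable (k : nat) (w : word) : Prop :=
  uncompletable k w /\ forall w' : word, uncompletable k w' -> size w <= size w'.

(* position j (0 <= j <= n-1) is forbidden in w if w[j+1..n] = drop j w
   is not in Pref(S_k-star) *)
Definition forbidden (k : nat) (w : word) (j : nat) : Prop :=
  j < size w /\ ~ isPref k (drop j w).

(* occurrence of p (of length k) at index s: w[s+1..s+k] = p *)
Definition occurs_at (k : nat) (p w : word) (s : nat) : Prop :=
  s + k <= size w /\ take k (drop s w) = p.

Definition occ_uv (k : nat) (w : word) (s : nat) : Prop :=
  occurs_at k (u k) w s \/ occurs_at k (v k) w s.

Definition consecutive (k : nat) (w : word) (s t : nat) : Prop :=
  s < t /\
  (t < s + k \/
   forall r, s <= r -> r + k <= t + k -> occ_uv k w r -> r = s \/ r = t).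

(* Main.v *)
Require Import Defs.
From mathcomp Require Import all_boot.
From Stdlib Require Import Lia Classical.
Set Implicit Arguments. Unset Strict Implicit. Unset Printing Implicit Defensive.

Ltac mylia := repeat match goal with
  | H : is_true (?a <= ?b) |- _ =>
      assert_fails (assert ((a <= b)%coq_nat) by assumption);
      have := elimT leP H; intro
  | H : is_true (?a == ?b :> nat) |- _ =>
      assert_fails (assert (a = b) by assumption);
      have := elimT eqP H; intro
  end;
  try (apply/leP);
  repeat match goal with H : context[Nat.pred] |- _ => rewrite -subn1 in H end;
  repeat match goal with H : context[addn] |- _ => rewrite -plusE in H end;
  repeat match goal with H : context[subn] |- _ => rewrite -minusE in H end;
  repeat match goal with H : context[muln] |- _ => rewrite -multE in H end;
  rewrite -?subn1 -?plusE -?minusE -?multE;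
  repeat match goal with H : ?P |- _ =>
    match type of P with Prop =>
      lazymatch P with
      | (_ <= _)%coq_nat => fail
      | (_ < _)%coq_nat => fail
      | @eq nat _ _ => fail
      | ~ (@eq nat _ _) => fail
      | _ => clear H
      end end end;
  lia.

Lemma inS_size k c : inS k c -> size c <= k.
Proof.
rewrite /inS => /orP [/andP [/andP [/eqP -> _] _] | /andP [/andP [/eqP -> _] _]] //.
exact: leq_pred.
Qed.

Lemma inS_size2 k c : inS k c -> k.-1 <= size c.
Proof.
rewrite /inS => /orP [/andP [/andP [/eqP -> _] _] | /andP [/andP [/eqP -> _] _]] //.
exact: leq_pred.
Qed.

Lemma isPref_cat k c z : inS k c -> isPref k z -> isPref k (c ++ z).
Proof.
move=> hc [y [ws [hall hfl]]]. exists y, (c :: ws). split; first by rewrite /= hc hall.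
by rewrite /= hfl catA.
Qed.

Lemma split_flat k ws A B : 0 < k -> all (inS k) ws -> flatten ws = A ++ B ->
  exists ws1 ws2 b, [/\ all (inS k) ws1, all (inS k) ws2, A = flatten ws1 ++ b,
     flatten ws2 = b ++ B & size b < k].
Proof.
move=> kpos; elim: ws A => [|c ws IH] A /=.
  move=> _; case: A => [|a A] //=; case: B => [|b B] //= _.
  by exists [::], [::], [::].
move=> /andP [hc hall] h.
case: (leqP (size c) (size A)) => hcA.
  have eA : A = take (size c) A ++ drop (size c) A by rewrite cat_take_drop.
  move: h; rewrite {1}eA -catA => /eqP.
  rewrite eqseq_cat; last by rewrite size_takel.
  case/andP => /eqP hc1 /eqP hrest.
  have [ws1 [ws2 [b [h1 h2 hA hB hb]]]] := IH _ hall hrest.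
  exists (c :: ws1), ws2, b; split; [by rewrite /= hc h1 | done | | done | done].
  by rewrite {1}eA hA -hc1 /= catA.
exists [::], (c :: ws), A; split; [done | by rewrite /= hc hall | done | done | ].
exact: leq_trans hcA (inS_size hc).
Qed.

Lemma cut_lemma k w x y : 0 < k -> uncompletable k w ->
  (forall b, size b < k -> isPref k (b ++ drop y w) -> isPref k (b ++ drop x w)) ->
  uncompletable k (take x w ++ drop y w).
Proof.
move=> kpos hu himp [X [Y [ws [hall hfl]]]].
have := split_flat (A := X ++ take x w) (B := drop y w ++ Y) kpos hall.
rewrite hfl -!catA => /(_ erefl) [ws1 [ws2 [b [h1 h2 hA hB hb]]]].
have hp : isPref k (b ++ drop y w) by exists Y, ws2; split => //; rewrite hB catA.
have [Y' [ws3 [h3 hfl3]]] := himp b hb hp.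
apply: hu. exists X, Y', (ws1 ++ ws3). split; first by rewrite all_cat h1 h3.
transitivity (X ++ (take x w ++ drop x w) ++ Y'); last by rewrite cat_take_drop.
by rewrite flatten_cat hfl3 !catA hA.
Qed.

Lemma take_cons_pred (T : Type) n (a : T) l : 0 < n -> take n (a :: l) = a :: take n.-1 l.
Proof. by case: n. Qed.

Lemma occ_nth k p w s j : occurs_at k p w s -> j < k -> nth false w (s + j) = nth false p j.
Proof. case=> _ <- hj. by rewrite nth_take // nth_drop. Qed.

Lemma nth_v k j : nth false (v k) j = (j < k.-1).
Proof.
rewrite /v nth_rcons size_nseq nth_nseq.
by case: (j < k.-1); case: (j == k.-1).
Qed.

Section Main.
Variables (k : nat) (w : word) (s t : nat).
Hypothesis k4 : 4 <= k.
Hypothesis hs : occurs_at k (v k) w s.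
Hypothesis ht : occurs_at k (v k) w t.
Hypothesis hcons : consecutive k w s t.

Definition NN x := isPref k (drop x w).

Lemma kpos : 0 < k. Proof. exact: leq_trans k4. Qed.

Lemma wv_s j : j < k -> nth false w (s + j) = (j < k.-1).
Proof. move=> hj; by rewrite (occ_nth hs hj) nth_v. Qed.
Lemma wv_t j : j < k -> nth false w (t + j) = (j < k.-1).
Proof. move=> hj; by rewrite (occ_nth ht hj) nth_v. Qed.

Lemma szw : t + k <= size w. Proof. by case: ht. Qed.

Lemma tsk : s + k <= t.
Proof.
case: hcons => hst _. rewrite leqNgt; apply/negP => hlt.
have hk1 : k.-1 < k by mylia.
have h1 := wv_s hk1.
have e : s + k.-1 = t + (s + k.-1 - t) by mylia.
have hk2 : s + k.-1 - t < k by mylia.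
have h2 := wv_t hk2.
rewrite -e h1 in h2.
have : s + k.-1 - t < k.-1 by mylia.
by rewrite -h2 ltnn.
Qed.

Lemma hocc r : s < r -> r < t -> ~ occ_uv k w r.
Proof.
move=> h1 h2 ho. case: hcons => _ [hlt | hall].
  have htk := tsk; mylia.
have hrk : r + k <= t + k by mylia.
have [] := hall r (ltnW h1) hrk ho => e; subst r; mylia.
Qed.

Lemma stepk r : s < r -> r < t -> NN (r + k) -> NN r.
Proof.
move=> h1 h2 hN. rewrite /NN.
have ed : drop r w = take k (drop r w) ++ drop (r + k) w.
  by rewrite -[in LHS](cat_take_drop k (drop r w)) drop_drop addnC.
rewrite ed; apply: isPref_cat hN.
have hsz : size (take k (drop r w)) = k.
  have hsw := szw; rewrite size_takel // size_drop; mylia.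
rewrite /inS hsz eqxx /=; apply/orP; left; apply/andP; split; apply/negP => /eqP he;
  apply: (hocc h1 h2); [left | right]; split => //; have hsw := szw; mylia.
Qed.

Lemma chain n y : s < y -> y + n * k <= t + k - 1 -> NN (y + n * k) -> NN y.
Proof.
elim: n => [|n IH] h1 h2; first by rewrite mul0n addn0.
rewrite mulSnr addnA in h2 *. move: h2 IH; move: (n * k) => m h2 IH hN.
have kp := kpos.
apply: IH => //; first by mylia.
apply: stepk hN; mylia.
Qed.

Lemma chain2 y Y : s < y -> y <= Y -> Y <= t + k - 1 -> k %| Y - y -> NN Y -> NN y.
Proof.
move=> h1 h2 h3 hd.
have eY : Y = y + (Y - y) %/ k * k by rewrite divnK // subnKC.
rewrite eY => hN. apply: chain hN => //. by rewrite -eY.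
Qed.

Lemma stepk1 x : s < x -> x <= s + k - 1 -> NN (x + k.-1) -> NN x.
Proof.
move=> h1 h2 hN. rewrite /NN.
have ed : drop x w = take k.-1 (drop x w) ++ drop (x + k.-1) w.
  by rewrite -[in LHS](cat_take_drop k.-1 (drop x w)) drop_drop addnC.
rewrite ed; apply: isPref_cat hN.
have tk := tsk; have sz := szw; have kp := kpos.
have hsz : size (take k.-1 (drop x w)) = k.-1.
  rewrite size_takel // size_drop; mylia.
have nthc j : j < k.-1 -> nth false (take k.-1 (drop x w)) j = nth false w (x + j).
  by move=> hj; rewrite nth_take // nth_drop.
rewrite /inS hsz eqxx /= orbC /=.
have -> : (k.-1 == k) = false by apply/negbTE/eqP; mylia.
apply/orP; left.
apply/andP; split; apply/negP => /eqP he.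
-
  case: (ltnP x (s + k.-1)) => hx.
    have := nthc 0 ltac:(mylia). rewrite he nth_nseq ifT; last by mylia.
    rewrite addn0.
    have -> : x = s + (x - s) by mylia.
    rewrite wv_s; last by mylia.
    have hh : x - s < k.-1 by mylia.
    by rewrite hh.
  have ex : x = s + k.-1 by mylia.
  apply: (hocc (r := s + k - 2)); [mylia | mylia | left; split; first by mylia].
  have eh : drop (s + k - 2) w = nth false w (s + k - 2) :: drop x w.
    rewrite (drop_nth false) ?ex //; first by congr (_ :: drop _ _); mylia.
    mylia.
  rewrite eh take_cons_pred // he /u.
  have -> : s + k - 2 = s + (k - 2) by mylia.
  rewrite wv_s; last by mylia.
  have hh : k - 2 < k.-1 by mylia.
  by rewrite hh.
-
  have := nthc (s + k.-1 - x) ltac:(mylia).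
  rewrite he nth_nseq ifT; last by mylia.
  have -> : x + (s + k.-1 - x) = s + k.-1 by mylia.
  rewrite wv_s; last by mylia.
  by rewrite ltnn.
Qed.


Hypothesis hmin : min_uncompletable k w.
Variables (i : nat) (Fp Fq : {set 'I_k}).
Hypothesis hp : forall j : 'I_k, j \in Fp <-> forbidden k w (s + j).
Hypothesis hq : forall j : 'I_k, j \in Fq <-> forbidden k w (t + j).
Hypothesis hi : 1 <= i <= k - 2.
Hypothesis hFq : Fq = [set j : 'I_k | (val j == 0) || (i <= val j <= k - 2)].

Lemma NqN (j : 'I_k) : j \notin Fq -> NN (t + j).
Proof.
move=> hj. apply: NNPP => hn. move/negP: hj; apply. apply/hq. split => //.
have h1 := szw; have h2 := ltn_ord j; mylia.
Qed.

Lemma NpF (j : 'I_k) : NN (s + j) -> j \notin Fp.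
Proof. move=> hN; apply/negP => /hp [_ h]; exact: h hN. Qed.

Lemma inFq (j : 'I_k) : (j \in Fq) = (val j == 0) || (i <= val j <= k - 2).
Proof. by rewrite hFq inE. Qed.

Lemma dvd_aux a : k %| a - a %% k.
Proof. by rewrite {1}(divn_eq a k) addnK dvdn_mull // dvdnn. Qed.

Lemma factA (j : 'I_k) : j \notin Fq -> (j + (t - s)) %% k != 0 ->
  NN (s + (j + (t - s)) %% k).
Proof.
move=> hj hnz. have hN := NqN hj.
have [m em] : exists m, m = j + (t - s) by eexists.
rewrite -em in hnz *.
have tk := tsk; have kp := kpos; have hjk := ltn_ord j.
have hle := leq_mod m k.
have hr0 : 0 < m %% k by rewrite lt0n.
apply: (chain2 (Y := t + j)) => //.
- mylia.
- mylia.
- mylia.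
- have -> : t + j - (s + m %% k) = m - m %% k by mylia.
  exact: dvd_aux.
Qed.

Lemma factB (j : 'I_k) : j \notin Fq -> (j + 1 + (t - s)) %% k != 0 ->
  NN (s + (j + 1 + (t - s)) %% k).
Proof.
move=> hj hnz. have hN := NqN hj.
have [m em] : exists m, m = j + 1 + (t - s) by eexists.
rewrite -em in hnz *.
have tk := tsk; have kp := kpos; have hjk := ltn_ord j.
have hr0 : 0 < m %% k by rewrite lt0n.
have hrk : m %% k < k := ltn_pmod m kp.
have hmk : k <= m by mylia.
have hQ : k <= m %/ k * k by apply: leq_pmull; rewrite divn_gt0.
have edm := divn_eq m k.
have hdQ : k %| m %/ k * k by apply: dvdn_mull; exact: dvdnn.
move: hQ edm hdQ; move: (m %/ k * k) => Q hQ edm hdQ.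
apply: stepk1; [mylia | mylia | ].
apply: (chain2 (Y := t + j)) => //.
- mylia.
- mylia.
- mylia.
- have -> : t + j - (s + m %% k + k.-1) = Q - k by mylia.
  apply: dvdn_sub => //; exact: dvdnn.
Qed.

Lemma nseq_neq n (a b : bool) : 0 < n -> a != b -> nseq n a != nseq n b.
Proof. case: n => // n _ hab. by rewrite /= eqseq_cons (negbTE hab). Qed.

Lemma last_nseqS (T : Type) (c x : T) n : last c (nseq n.+1 x) = x.
Proof. by elim: n c => //= n IH c. Qed.

Lemma nseqSp (T : Type) n (x : T) : 0 < n -> nseq n x = x :: nseq n.-1 x.
Proof. by case: n. Qed.

Lemma cons_neq_v c0 : 1 < k -> c0 :: nseq k.-1 lb != v k.
Proof.
move=> hk. rewrite /v lastI.
have -> : k.-1 = (k.-2).+1 by case: k hk => [|[|k']].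
rewrite last_nseqS. apply/negP => /eqP /(congr1 (last false)); rewrite !last_rcons.
done.
Qed.

Lemma notinS_v : ~~ inS k (v k).
Proof.
have kp := kpos.
rewrite /inS eqxx !andbF /= size_rcons size_nseq.
have -> : (k.-1.+1 == k.-1) = false by apply/negbTE/eqP; mylia.
done.
Qed.

Lemma notinS_b : ~~ inS k (nseq k.-1 lb).
Proof.
have kp := kpos.
rewrite /inS eqxx !andbF size_nseq orbF.
have -> : (k.-1 == k) = false by apply/negbTE/eqP; mylia.
done.
Qed.

Lemma take_v_t : take k.-1 (drop t w) = nseq k.-1 lb.
Proof.
case: ht => _ e.
rewrite -(take_takel _ (leq_pred k)) e /v -cats1 take_size_cat //.
by rewrite size_nseq.
Qed.

Lemma take_v_s : take k.-1 (drop s w) = nseq k.-1 lb.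
Proof.
case: hs => _ e.
rewrite -(take_takel _ (leq_pred k)) e /v -cats1 take_size_cat //.
by rewrite size_nseq.
Qed.

Lemma sizeb1 b : i = 1 -> size b < k -> isPref k (b ++ drop t w) -> size b = 1.
Proof.
move=> i1 hb [Y [ws [hall hfl]]].
have sz := szw; have kp := kpos.
case: ws hall hfl => [|c ws] /=.
  move=> _ /(congr1 size); rewrite !size_cat size_drop /=; mylia.
move=> /andP [hc hall] hfl.
have hc1 := inS_size hc; have hc2 := inS_size2 hc.
have [m em] : exists m, m = size c - size b by eexists.
have hdt : drop t w = take m (drop t w) ++ drop m (drop t w) by rewrite cat_take_drop.
have e1 : size c = size b + m by mylia.
have e2 : m <= size (drop t w) by rewrite size_drop; mylia.
move: hfl. rewrite hdt -!catA catA => /eqP. rewrite eqseq_cat; last first.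
  rewrite size_cat size_takel; [exact: e1 | exact: e2].
case/andP => /eqP ec /eqP ews.
have hP : NN (t + m).
  by exists Y, ws; split => //; rewrite ews drop_drop addnC.
case: (ltnP m k.-1) => hm.
  have hmk : m < k by mylia.
  have : Ordinal hmk \in Fq.
    rewrite inFq /= i1. case: eqP => //= hm0. apply/andP; split; mylia.
  by move/hq => [_ []].
have hbs : size b <= 1 by mylia.
case: (posnP (size b)) => hb0; last by mylia.
move/size0nil: hb0 => hb0; subst b.
move: ec hc; rewrite /= => ->.
case: (ltnP m k) => hmk.
  have -> : m = k.-1 by mylia.
  rewrite take_v_t => hc. by move: notinS_b; rewrite hc.
have -> : m = k by mylia.
case: ht => _ -> hc. by move: notinS_v; rewrite hc.
Qed.

Lemma cut_contra x0 : x0 < t -> i = 1 ->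
  (forall c0 : bool, isPref k ([:: c0] ++ drop x0 w)) -> False.
Proof.
move=> hx i1 hall.
have kp := kpos; have sz := szw.
have hu := cut_lemma (x := x0) (y := t) kp hmin.1.
have hu' : uncompletable k (take x0 w ++ drop t w).
  apply: hu => b hb hP. have := sizeb1 i1 hb hP.
  by case: b hb hP => [|c0 [|]] //= _ _ _; exact: hall.
have hx0 : x0 <= size w by mylia.
have := hmin.2 _ hu'. rewrite size_cat size_takel // size_drop => hle. mylia.
Qed.

Lemma cut0 : i = 1 -> k %| t - s -> False.
Proof.
move=> i1 hd. have kp := kpos; have tk := tsk.
have hk1 : k.-1 < k by mylia.
have nq : Ordinal hk1 \notin Fq.
  rewrite inFq /= negb_or; apply/andP; split; [apply/eqP; mylia | ].
  apply/negP => /andP [_ h]. mylia.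
have hN := NqN nq.
have hNs : NN (s + k.-1).
  apply: (chain2 (Y := t + k.-1)) hN => /=; [mylia | mylia | mylia | ].
  by have -> : t + k.-1 - (s + k.-1) = t - s by mylia.
apply: (cut_contra (x0 := s)) => //; first by mylia.
move=> c0.
have ed : drop s w = take k.-1 (drop s w) ++ drop (s + k.-1) w.
  by rewrite -[in LHS](cat_take_drop k.-1 (drop s w)) drop_drop addnC.
rewrite ed take_v_s catA. apply: isPref_cat hNs.
rewrite /inS /= size_nseq.
have -> : k.-1.+1 = k by mylia.
rewrite eqxx /=. apply/orP; left. apply/andP; split.
  rewrite /u eqseq_cons (negbTE (nseq_neq _ _)) ?andbF //; mylia.
apply: cons_neq_v; mylia.
Qed.

Lemma cut1 : i = 1 -> k %| t - s - 1 -> False.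
Proof.
move=> i1 hd. have kp := kpos; have tk := tsk.
have hk1 : k.-1 < k by mylia.
have nq : Ordinal hk1 \notin Fq.
  rewrite inFq /= negb_or; apply/andP; split; [apply/eqP; mylia | ].
  apply/negP => /andP [_ h]. mylia.
have hN := NqN nq.
have hNs : NN (s + k).
  apply: (chain2 (Y := t + k.-1)) hN => /=; [mylia | mylia | mylia | ].
  by have -> : t + k.-1 - (s + k) = t - s - 1 by mylia.
apply: (cut_contra (x0 := s + 2)) => //; first by mylia.
move=> c0.
have ed : drop (s + 2) w = take (k - 2) (drop (s + 2) w) ++ drop (s + k) w.
  rewrite -[in LHS](cat_take_drop (k - 2) (drop (s + 2) w)) drop_drop.
  by have -> : k - 2 + (s + 2) = s + k by mylia.
rewrite ed catA. apply: isPref_cat hNs.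
have sz := szw.
have hsz : size (take (k - 2) (drop (s + 2) w)) = k - 2.
  rewrite size_takel // size_drop; mylia.
have nthc j : j < k - 2 -> nth false (take (k - 2) (drop (s + 2) w)) j = nth false w (s + (2 + j)).
  by move=> hj; rewrite nth_take // nth_drop addnA.
rewrite /inS /= hsz.
have -> : (k - 2).+1 == k = false by apply/negbTE/eqP; mylia.
have -> : (k - 2).+1 == k.-1 by apply/eqP; mylia.
rewrite /=. apply/andP; split.
  rewrite (nseqSp _ (_ : 0 < k.-1)); last by mylia.
  rewrite eqseq_cons. apply/negP => /andP [_ /eqP h].
  have := congr1 (nth false ^~ 0) h. cbv beta.
  rewrite nthc; last by mylia.
  rewrite addn0 wv_s; last by mylia.
  rewrite nth_nseq. have -> : 2 < k.-1 by mylia. by have -> : 0 < k.-1.-1 by mylia.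
rewrite (nseqSp _ (_ : 0 < k.-1)); last by mylia.
rewrite eqseq_cons. apply/negP => /andP [_ /eqP h].
have := congr1 (nth false ^~ (k - 3)) h. cbv beta.
rewrite nthc; last by mylia.
have -> : 2 + (k - 3) = k.-1 by mylia.
rewrite wv_s ?ltnn; last by mylia.
rewrite nth_nseq. by have -> : k - 3 < k.-1.-1 by mylia.
Qed.

Lemma main : #|Fp| < #|Fq|.
Proof.
have kp := kpos; have tk := tsk.
have /andP [hi1 hik2] := hi.
have hcFp := cardsC Fp; have hcFq := cardsC Fq. rewrite card_ord in hcFp hcFq.
suff hh : #|~: Fq| < #|~: Fp| by mylia.
pose o0 := Ordinal kp.
have hrot : forall j : 'I_k, (j + (t - s)) %% k < k := fun j => ltn_pmod _ kp.
pose rot := fun j : 'I_k => Ordinal (hrot j).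
have rot_inj : injective rot.
  move=> j1 j2 /(congr1 val) /= /eqP. rewrite eqn_modDr !modn_small // => /eqP h.
  exact: val_inj.
have o0Fq : o0 \in Fq by rewrite inFq eqxx.
have hk1 : k.-1 < k by mylia.
have nq : Ordinal hk1 \notin Fq.
  rewrite inFq /= negb_or; apply/andP; split; [apply/eqP; mylia | ].
  apply/negP => /andP [_ h]. mylia.
have rot0 : nat_of_ord (rot o0) = (k.-1 + 1 + (t - s)) %% k.
  rewrite /= add0n addn1 prednK //. by rewrite modnDl.
case: (ltnP 1 i) => hi2.
  have hik : i < k by mylia.
  pose oi := Ordinal hik.
  have oiFq : oi \in Fq by rewrite inFq /=; apply/orP; right; rewrite leqnn /=; mylia.
  have o0i : (o0 == oi) = false by apply/negbTE/eqP => /(congr1 val) /= h; mylia.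
  pose A := o0 |: (oi |: ~: Fq).
  have cA : #|A| = (#|~: Fq| + 2)%N.
    by rewrite !cardsU1 !inE o0Fq oiFq o0i /= addnA addnC.
  have hR : (rot @: A) :\ o0 \subset ~: Fp.
    apply/subsetP => z; rewrite !inE => /andP [hz0 /imsetP [j hj ez]].
    rewrite ez in hz0 *.
    have hz0' : nat_of_ord (rot j) != 0.
      by apply: contra hz0 => /eqP h; apply/eqP; apply: val_inj.
    apply: NpF. move: hj; rewrite !inE => /orP [/eqP ej | /orP [/eqP ej | hjq]].
    - rewrite ej in hz0' *. rewrite rot0 in hz0' *.
      exact: factB nq hz0'.
    - have hi1m : i - 1 < k by mylia.
      have nq2 : Ordinal hi1m \notin Fq.
        rewrite inFq /= negb_or; apply/andP; split; [apply/eqP; mylia | ].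
        apply/negP => /andP [h _]. mylia.
      have e2 : nat_of_ord (rot j) = (i - 1 + 1 + (t - s)) %% k by rewrite ej /= subnK.
      rewrite e2 in hz0' *. exact: factB nq2 hz0'.
    - exact: factA hjq hz0'.
  have c1 := subset_leq_card hR.
  have c2 := cardsD1 o0 (rot @: A).
  rewrite card_imset // cA in c2.
  have c3 := leq_b1 (o0 \in rot @: A).
  move: c1 c2 c3.
  set X1 := #|~: Fq|. set X2 := #|~: Fp|. set X3 := #|(rot @: A) :\ o0|. set X4 := nat_of_bool _.
  clearbody X1 X2 X3 X4 => ? ? ?. mylia.
have i1 : i = 1 by mylia.
have onlyk (j : 'I_k) : j \notin Fq -> j = Ordinal hk1.
  rewrite inFq negb_or => /andP [h0 h1]. apply: val_inj => /=.
  case: (leqP j (k - 2)) => hjk.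
    by move: h1; rewrite i1 lt0n h0 hjk.
  have hjo := ltn_ord j; mylia.
have [d0|nd0] := boolP (k %| t - s); first by exfalso; exact: cut0 i1 d0.
have [d1|nd1] := boolP (k %| t - s - 1); first by exfalso; exact: cut1 i1 d1.
pose A := o0 |: ~: Fq.
have cA : #|A| = (#|~: Fq| + 1)%N.
  by rewrite !cardsU1 !inE o0Fq /= addnC.
have hR : rot @: A \subset ~: Fp.
  apply/subsetP => z; rewrite !inE => /imsetP [j hj ->].
  apply: NpF. move: hj; rewrite !inE => /orP [/eqP ej | hjq].
  - rewrite ej rot0. apply: factB nq _. rewrite -rot0 /= add0n. exact: nd0.
  - have ej := onlyk _ hjq. rewrite ej. apply: factA nq _.
    apply: contra nd1 => h.
    have : k %| k + (t - s - 1).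
      by have -> : k + (t - s - 1) = k.-1 + (t - s) by mylia.
    by rewrite dvdn_addr // dvdnn.
have c1 := subset_leq_card hR.
rewrite card_imset // cA in c1.
move: c1. set X1 := #|~: Fq|. set X2 := #|~: Fp|. clearbody X1 X2 => ?. mylia.
Qed.

End Main.

Theorem lemma7 (k : nat) (w : word) (s t i : nat) (Fp Fq : {set 'I_k}) :
  4 <= k ->
  min_uncompletable k w ->
  occurs_at k (v k) w s ->
  occurs_at k (v k) w t ->
  consecutive k w s t ->
  (forall j : 'I_k, j \in Fp <-> forbidden k w (s + j)) ->
  (forall j : 'I_k, j \in Fq <-> forbidden k w (t + j)) ->
  1 <= i <= k - 2 ->
  Fq = [set j : 'I_k | (val j == 0) || (i <= val j <= k - 2)] ->
  #|Fp| < #|Fq|.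
Proof.
move=> k4 hmin hs ht hcons hp hq hi hFq.
exact: (main k4 hs ht hcons hmin hp hq hi hFq).
Qed.
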